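(* For $n\geq 1$, $$P^{(\mathsf{inv}, \mathsf{exc})}(\mathfrak{D}_n(321); q, t)=\left(\frac{1+xt}{1+x}\right)^{n}P^{(\mathsf{inv}, \mathsf{cpk},\mathsf{exc})}\left(\mathfrak{D}_n(321); q, \frac{(1+x)^{2}t}{(x+t)(1+xt)},\frac{x+t}{1+xt}\right),$$ equivalently, $$P^{(\mathsf{inv}, \mathsf{cpk},\mathsf{exc})}(\mathfrak{D}_n(321); q, x,t)=\left(\frac{1+u}{1+uv}\right)^{n}P^{(\mathsf{inv}, \mathsf{exc})}(\mathfrak{D}_n(321); q, v),$$ where $u=\frac{1+t^{2}-2xt-(1-t)\sqrt{(1+t)^{2}-4xt}}{2(1-x)t}$ and $v=\frac{(1+t)^{2}-2xt-(1+t)\sqrt{(1+t)^{2}-4xt}}{2xt}$.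
   Context: $\mathfrak{D}_n(321)$ is the set of derangements of $[n]$ avoiding the pattern $321$. $P^{(\mathsf{stat}_1,\ldots,\mathsf{stat}_m)}(\Omega;t_1,\ldots,t_m)=\sum_{\sigma\in\Omega}\prod_jt_j^{\mathsf{stat}_j\sigma}$. $\mathsf{inv}$ is the inversion number, $\mathsf{exc}\,\sigma=\#\{i:\sigma(i)>i\}$, $\mathsf{cpk}\,\sigma=\#\{x:\sigma^{-1}(x)<x>\sigma(x)\}$. *)

(* Defs.v *)
From mathcomp Require Import all_boot all_order all_algebra all_fingroup.
Set Implicit Arguments.
Unset Strict Implicit.
Unset Printing Implicit Defensive.
Import Order.TTheory GRing.Theory Num.Theory.

(* Permutations of [n] are modelled as 'S_n (permutations of 'I_n = {0..n-1});
   all statistics below depend only on relative order, so the 0-based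
   indexing is harmless. *)

Section Stats.
Variable n : nat.
Implicit Type s : 'S_n.

Definition inv_stat s : nat :=
  #|[set p : 'I_n * 'I_n | (p.1 < p.2)%N && (s p.2 < s p.1)%N]|.

Definition exc_stat s : nat := #|[set i : 'I_n | (i < s i)%N]|.

Definition cpk_stat s : nat :=
  #|[set x : 'I_n | ((s^-1)%g x < x)%N && (s x < x)%N]|.

Definition is_derangement s : bool := [forall i, s i != i].

Definition avoids321 s : bool :=
  ~~ [exists i : 'I_n, exists j : 'I_n, exists k : 'I_n,
        [&& (i < j)%N, (j < k)%N, (s k < s j)%N & (s j < s i)%N]].

Definition D321 : {set 'S_n} := [set s | is_derangement s && avoids321 s].

End Stats.

Local Open Scope ring_scope.

Definition P_inv_exc (R : comNzRingType) (n : nat) (q t : R) : R :=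
  \sum_(s in D321 n) q ^+ inv_stat s * t ^+ exc_stat s.

Definition P_inv_cpk_exc (R : comNzRingType) (n : nat) (q x t : R) : R :=
  \sum_(s in D321 n) q ^+ inv_stat s * x ^+ cpk_stat s * t ^+ exc_stat s.

(* Main.v *)
Require Import Defs.
From mathcomp Require Import all_boot all_order all_algebra all_fingroup.
From mathcomp Require Import zify ring.
Import Order.TTheory GRing.Theory Num.Theory.
Set Implicit Arguments.
Unset Strict Implicit.
Unset Printing Implicit Defensive.

Section Count.
Variable n : nat.
Implicit Types S A B I : {set 'I_n}.

Definition cnt S (k : 'I_n) : nat := #|[set j in S | (j < k)%N]|.

Lemma card_lt_ord (m : nat) : (m <= n)%N -> #|[set j : 'I_n | (j < m)%N]| = m.
Proof.
move=> mn.
have -> : [set j : 'I_n | (j < m)%N] = [set widen_ord mn j | j in 'I_m].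
  apply/setP => j; rewrite inE; apply/idP/imsetP => [jm|[i _ ->]] //=.
  by exists (Ordinal jm) => //; apply: val_inj.
by rewrite card_imset ?card_ord // => a b /(congr1 val) /= ab; apply: val_inj.
Qed.

Lemma card_le_ord (m : 'I_n) : #|[set j : 'I_n | (j <= m)%N]| = m.+1.
Proof. rewrite -(card_lt_ord (ltn_ord m)); apply: eq_card => j; by rewrite !inE. Qed.

Lemma cnt_le_card S (k : 'I_n) : #|[set j in S | (j <= k)%N]| = cnt S k + (k \in S).
Proof.
rewrite (cardsD1 k [set j in S | (j <= k)%N]) inE leqnn andbT addnC; congr (_ + _).
by apply: eq_card => j; rewrite !inE ltn_neqAle andbCA -val_eqE.
Qed.

Lemma cnt_lek S (k : 'I_n) : (cnt S k <= k)%N.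
Proof.
apply: (leq_trans _ (eq_leq (card_lt_ord (ltnW (ltn_ord k))))); apply: subset_leq_card.
by apply/subsetP => j; rewrite !inE => /andP[].
Qed.

Lemma cntU A I (k : 'I_n) : [disjoint A & I] -> cnt (A :|: I) k = cnt A k + cnt I k.
Proof.
move=> dAI; rewrite /cnt -cardsUI.
have -> : [set j in A | (j < k)%N] :&: [set j in I | (j < k)%N] = set0.
  apply/setP => j; rewrite !inE; case jA: (j \in A) => //=.
  by rewrite (disjointFr dAI jA) andbF.
rewrite cards0 addn0; apply: eq_card => j; by rewrite !inE andb_orl.
Qed.

Lemma cntC S (k : 'I_n) : cnt (~: S) k = k - cnt S k.
Proof.
have := @cntU S (~: S) k; rewrite -subsets_disjoint subxx setUCr => /(_ isT).
have -> : cnt [set: 'I_n] k = k.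
  rewrite /cnt -[RHS](card_lt_ord (ltnW (ltn_ord k))); apply: eq_card => j; by rewrite !inE.
move=> ->; lia.
Qed.

Lemma cnt_mono S (j k : 'I_n) : (j <= k)%N -> (cnt S j <= cnt S k)%N.
Proof.
move=> jk; apply: subset_leq_card; apply/subsetP => i; rewrite !inE => /andP[-> /leq_trans]; exact.
Qed.

Lemma cnt_strict S (j k : 'I_n) : (j < k)%N -> j \in S -> (cnt S j < cnt S k)%N.
Proof.
move=> jk jS; have := cnt_le_card S j; rewrite jS addn1 => <-; apply: subset_leq_card.
apply/subsetP => i; rewrite !inE => /andP[-> /leq_ltn_trans]; exact.
Qed.

Lemma cnt_ltI S (j k : 'I_n) : (cnt S j < cnt S k)%N -> (j < k)%N.
Proof. by move=> h; rewrite ltnNge; apply/negP => /(cnt_mono S); rewrite leqNgt h. Qed.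

Lemma cnt_inj S i j : i \in S -> j \in S -> cnt S i = cnt S j -> i = j.
Proof.
move=> iS jS e; apply: val_inj; case: (ltngtP i j) => // h.
  by have := cnt_strict h iS; rewrite e ltnn.
by have := cnt_strict h jS; rewrite e ltnn.
Qed.

Lemma cnt_lt_card S i : i \in S -> (cnt S i < #|S|)%N.
Proof.
move=> iS; have := cnt_le_card S i; rewrite iS addn1 => <-; apply: subset_leq_card.
by apply/subsetP => j; rewrite inE => /andP[].
Qed.

Lemma exists_rank S r : (r < #|S|)%N -> exists2 j, j \in S & cnt S j = r.
Proof.
move=> rS.
have U : uniq [seq cnt S j | j <- enum S].
  rewrite map_inj_in_uniq ?enum_uniq // => a b; rewrite !mem_enum; exact: cnt_inj.
have S1 : {subset [seq cnt S j | j <- enum S] <= iota 0 #|S|}.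
  by move=> m /mapP[j]; rewrite mem_enum mem_iota add0n => jS ->; apply: cnt_lt_card.
have S2 : (size (iota 0 #|S|) <= size [seq cnt S j | j <- enum S])%N.
  by rewrite size_map size_iota -cardE.
have [_ sub] := uniq_min_size U S1 S2.
have /mapP[j] : r \in [seq cnt S j | j <- enum S] by rewrite sub mem_iota.
by rewrite mem_enum => jS ->; exists j.
Qed.

End Count.

Section Valid.
Variable n : nat.
Implicit Types S A B I : {set 'I_n}.

Definition valid A B : bool :=
  [&& #|A| == #|B|,
      [forall k, (cnt B k + (k \in B) <= cnt A k)%N] &
      [forall k, (cnt (~: A) k + (k \in ~: A) <= cnt (~: B) k)%N]].

Lemma cardsU_disj A I : [disjoint A & I] -> #|A :|: I| = #|A| + #|I|.
Proof.
move=> d; rewrite cardsU; suff -> : A :&: I = set0 by rewrite cards0 subn0.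
exact: disjoint_setI0.
Qed.

Lemma valid_common A B I : [disjoint I & A :|: B] ->
  valid (A :|: I) (B :|: I) = valid A B.
Proof.
move=> d.
have dA : [disjoint A & I].
  by rewrite disjoint_sym; apply: disjointWr d; apply: subsetUl.
have dB : [disjoint B & I].
  by rewrite disjoint_sym; apply: disjointWr d; apply: subsetUr.
rewrite /valid !cardsU_disj // eqn_add2r; congr (_ && _).
have E : forall k, ((cnt (B :|: I) k + (k \in B :|: I) <= cnt (A :|: I) k)%N &&
      (cnt (~: (A :|: I)) k + (k \in ~: (A :|: I)) <= cnt (~: (B :|: I)) k)%N) =
      ((cnt B k + (k \in B) <= cnt A k)%N &&
      (cnt (~: A) k + (k \in ~: A) <= cnt (~: B) k)%N).
  move=> k; rewrite !cntC !cntU // !in_setC !in_setU.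
  have hA := cnt_lek (A :|: I) k; have hB := cnt_lek (B :|: I) k.
  rewrite !cntU // in hA hB.
  case kI: (k \in I).
    have dA' : [disjoint I & A] by rewrite disjoint_sym.
    have dB' : [disjoint I & B] by rewrite disjoint_sym.
    rewrite (disjointFr dA' kI) (disjointFr dB' kI) /=.
    apply/idP/idP => /andP[h1 h2]; apply/andP; split; lia.
  case: (k \in A); case: (k \in B) => /=; apply/idP/idP => /andP[h1 h2]; apply/andP; split; lia.
apply/idP/idP => /andP[/forallP h1 /forallP h2]; apply/andP; split; apply/forallP => k.
- by have := E k; rewrite h1 h2 /= => /esym /andP[].
- by have := E k; rewrite h1 h2 /= => /esym /andP[].
- by have := E k; rewrite [in RHS]h1 [in RHS]h2 /= => /andP[].
- by have := E k; rewrite [in RHS]h1 [in RHS]h2 /= => /andP[].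
Qed.

End Valid.

Section Perm.
Variable n : nat.
Implicit Types (s : 'S_n) (A B : {set 'I_n}).

Definition Aset s : {set 'I_n} := [set i : 'I_n | (i < s i)%N].
Definition Bset s : {set 'I_n} := s @: Aset s.

Lemma memB s a : (s a \in Bset s) = (a \in Aset s).
Proof. by rewrite mem_imset //; exact: perm_inj. Qed.

Lemma as_img s (j : 'I_n) : exists a, j = s a.
Proof. by exists ((s^-1)%g j); rewrite permKV. Qed.

Lemma der_lt s i : is_derangement s -> i \notin Aset s -> (s i < i)%N.
Proof.
move=> /forallP /(_ i) ne; rewrite inE -leqNgt leq_eqVlt => /orP[/eqP e|//].
by move: ne; rewrite (_ : s i = i) ?eqxx //; apply: val_inj.
Qed.

Lemma Phi_valid s : is_derangement s -> valid (Aset s) (Bset s).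
Proof.
move=> ds; apply/and3P; split.
- by rewrite /Bset card_imset //; exact: perm_inj.
- apply/forallP => k; rewrite -cnt_le_card.
  apply: (leq_trans _ (leq_imset_card s _)); apply: subset_leq_card.
  apply/subsetP => j; rewrite inE => /andP[/imsetP[a aA ->] jk]; apply: imset_f.
  by rewrite inE aA /=; move: aA; rewrite inE => /leq_trans; apply.
- apply/forallP => k; rewrite -cnt_le_card.
  rewrite -(card_imset _ (@perm_inj _ s)); apply: subset_leq_card.
  apply/subsetP => y /imsetP[j]; rewrite !inE => /andP[jA jk] ->.
  have jA' : j \notin Aset s by rewrite inE.
  rewrite memB jA' /=; exact: (leq_trans (der_lt ds jA') jk).
Qed.

Lemma exc_wit s (j : 'I_n) : (j < s j)%N -> exists k : 'I_n, (j < k)%N && (s k < s j)%N.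
Proof.
move=> js; case: (boolP [exists k : 'I_n, (j < k)%N && (s k < s j)%N]) => [/existsP //|/existsPn h].
have sub : (s^-1)%g @: [set v : 'I_n | (v <= s j)%N] \subset [set k : 'I_n | (k <= j)%N].
  apply/subsetP => y /imsetP[v]; rewrite !inE => vs ->.
  rewrite leqNgt; apply/negP => jy; have := h ((s^-1)%g v); rewrite jy permKV /=.
  rewrite ltn_neqAle vs andbT negbK => /eqP /val_inj e.
  by move: jy; rewrite e permK ltnn.
have := subset_leq_card sub; rewrite card_imset ?card_le_ord; last exact: perm_inj.
by rewrite ltnS leqNgt js.
Qed.

Lemma def_wit s (i : 'I_n) : (s i < i)%N -> exists k : 'I_n, (k < i)%N && (s i < s k)%N.
Proof.
move=> si; case: (boolP [exists k : 'I_n, (k < i)%N && (s i < s k)%N]) => [/existsP //|/existsPn h].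
have sub : s @: [set k : 'I_n | (k <= i)%N] \subset [set v : 'I_n | (v <= s i)%N].
  apply/subsetP => y /imsetP[k]; rewrite !inE => ki ->.
  move: ki; rewrite leq_eqVlt => /orP[/eqP /val_inj -> //| ki].
  by have := h k; rewrite ki /= -leqNgt.
have := subset_leq_card sub; rewrite card_imset ?card_le_ord; last exact: perm_inj.
by rewrite ltnS leqNgt si.
Qed.

Lemma no321 s (i j k : 'I_n) : avoids321 s -> (i < j)%N -> (j < k)%N ->
  (s k < s j)%N -> (s j < s i)%N -> False.
Proof.
move=> /negP av ij jk kj ji; apply: av; apply/existsP; exists i; apply/existsP; exists j;
  apply/existsP; exists k; by rewrite ij jk kj ji.
Qed.

Lemma incrA s (i j : 'I_n) : avoids321 s -> (i < j)%N -> (i < s i)%N -> (j < s j)%N ->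
  (s i < s j)%N.
Proof.
move=> av ij _ js; rewrite ltnNge leq_eqVlt; apply/negP => /orP[/eqP /val_inj e|ji].
  by move: ij; rewrite (perm_inj e) ltnn.
have [k /andP[jk kj]] := exc_wit js; exact: (no321 av ij jk kj ji).
Qed.

Lemma incrD s (i j : 'I_n) : avoids321 s -> (i < j)%N -> (s i < i)%N -> (s j < j)%N ->
  (s i < s j)%N.
Proof.
move=> av ij si _; rewrite ltnNge leq_eqVlt; apply/negP => /orP[/eqP /val_inj e|ji].
  by move: ij; rewrite (perm_inj e) ltnn.
have [k /andP[ki ik]] := def_wit si; exact: (no321 av ki ij ji ik).
Qed.

Lemma monoA s (a i : 'I_n) : avoids321 s -> a \in Aset s -> i \in Aset s ->
  (s a < s i)%N = (a < i)%N.
Proof.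
rewrite !inE => av aA iA; case: (ltngtP a i) => h.
- exact: incrA.
- by apply/negbTE; rewrite -leqNgt ltnW // incrA.
- by rewrite (_ : a = i) ?ltnn //; apply: val_inj.
Qed.

Lemma monoD s (a i : 'I_n) : is_derangement s -> avoids321 s -> a \notin Aset s -> i \notin Aset s ->
  (s a < s i)%N = (a < i)%N.
Proof.
move=> ds av aA iA; have sa := der_lt ds aA; have si := der_lt ds iA.
case: (ltngtP a i) => h.
- exact: incrD.
- by apply/negbTE; rewrite -leqNgt ltnW // incrD.
- by rewrite (_ : a = i) ?ltnn //; apply: val_inj.
Qed.

Lemma rankA s i : avoids321 s -> i \in Aset s -> cnt (Bset s) (s i) = cnt (Aset s) i.
Proof.
move=> av iA; rewrite /cnt -(card_imset [set a in Aset s | (a < i)%N] (@perm_inj _ s)).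
apply: eq_card => j; have [a ->] := as_img s j.
rewrite inE memB mem_imset ?inE; last exact: perm_inj.
by case aA: (a < s a) => //=; rewrite monoA // inE.
Qed.

Lemma rankD s i : is_derangement s -> avoids321 s -> i \notin Aset s ->
  cnt (~: Bset s) (s i) = cnt (~: Aset s) i.
Proof.
move=> ds av iA; rewrite /cnt -(card_imset [set a in ~: Aset s | (a < i)%N] (@perm_inj _ s)).
apply: eq_card => j; have [a ->] := as_img s j.
rewrite inE in_setC memB mem_imset ?inE; last exact: perm_inj.
by case aA: (a < s a) => //=; rewrite monoD // inE aA.
Qed.

Lemma Phi_inj : {in D321 n &, injective (fun s => (Aset s, Bset s))}.
Proof.
move=> s1 s2; rewrite !inE => /andP[d1 a1] /andP[d2 a2] [eA eB].
apply/permP => i; case iA: (i \in Aset s1).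
- have iA2 : i \in Aset s2 by rewrite -eA.
  apply: (@cnt_inj _ (Bset s1)); first by rewrite memB.
    by rewrite eB memB.
  by rewrite rankA // eB rankA // eA.
- have iA1 : i \notin Aset s1 by rewrite iA.
  have iA2 : i \notin Aset s2 by rewrite -eA.
  apply: (@cnt_inj _ (~: Bset s1)); first by rewrite in_setC memB.
    by rewrite eB in_setC memB.
  by rewrite rankD // eB rankD // eA.
Qed.

End Perm.

Section Build.
Variable n : nat.
Variables A B : {set 'I_n}.
Hypothesis V : valid A B.

Definition fsel (i : 'I_n) : 'I_n :=
  if i \in A then odflt i [pick j in B | cnt B j == cnt A i]
  else odflt i [pick j in ~: B | cnt (~: B) j == cnt (~: A) i].

Lemma V_card : #|A| = #|B|.
Proof. by case/and3P: V => /eqP. Qed.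
Lemma V1 k : (cnt B k + (k \in B) <= cnt A k)%N.
Proof. by case/and3P: V => _ /forallP. Qed.
Lemma V2 k : (cnt (~: A) k + (k \in ~: A) <= cnt (~: B) k)%N.
Proof. by case/and3P: V => _ _ /forallP. Qed.

Lemma fsel_A i : i \in A -> fsel i \in B /\ cnt B (fsel i) = cnt A i.
Proof.
move=> iA; rewrite /fsel iA; case: pickP => [j /andP[jB /eqP] //|none].
have h : (cnt A i < #|B|)%N by rewrite -V_card cnt_lt_card.
have [j jB jc] := exists_rank h.
by have := none j; rewrite jB jc eqxx.
Qed.

Lemma fsel_D i : i \notin A -> fsel i \in ~: B /\ cnt (~: B) (fsel i) = cnt (~: A) i.
Proof.
move=> iA; rewrite /fsel (negbTE iA); case: pickP => [j /andP[jB /eqP] //|none].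
have cC : #|~: A| = #|~: B|.
  have := cardsC A; have := cardsC B; rewrite V_card; lia.
have h : (cnt (~: A) i < #|~: B|)%N by rewrite -cC cnt_lt_card // in_setC.
have [j jB jc] := exists_rank h.
by have := none j; rewrite jB jc eqxx.
Qed.

Lemma fsel_inj : injective fsel.
Proof.
move=> i1 i2; case i1A: (i1 \in A); case i2A: (i2 \in A).
- have [b1 c1] := fsel_A i1A; have [b2 c2] := fsel_A i2A.
  move=> e; apply: (@cnt_inj _ A) => //; by rewrite -c1 -c2 e.
- have [b1 _] := fsel_A i1A; have [b2 _] := fsel_D (negbT i2A).
  by move=> e; move: b2; rewrite -e in_setC b1.
- have [b1 _] := fsel_D (negbT i1A); have [b2 _] := fsel_A i2A.
  by move=> e; move: b1; rewrite e in_setC b2.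
- have [b1 c1] := fsel_D (negbT i1A); have [b2 c2] := fsel_D (negbT i2A).
  move=> e; apply: (@cnt_inj _ (~: A)); rewrite ?in_setC ?i1A ?i2A //; by rewrite -c1 -c2 e.
Qed.

Lemma fsel_exc i : i \in A -> (i < fsel i)%N.
Proof.
move=> iA; have [bB c] := fsel_A iA; rewrite ltnNge; apply/negP => bi.
have := V1 (fsel i); rewrite bB c addn1 => h.
have := cnt_mono A bi; lia.
Qed.

Lemma fsel_def i : i \notin A -> (fsel i < i)%N.
Proof.
move=> iA; have [bB c] := fsel_D iA; rewrite ltnNge; apply/negP => ib.
have := V2 i; rewrite in_setC iA addn1 => h.
have := cnt_mono (~: B) ib; lia.
Qed.

Definition sig : 'S_n := perm fsel_inj.

Lemma sig_D321 : sig \in D321 n.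
Proof.
rewrite inE; apply/andP; split.
  apply/forallP => i; rewrite permE; apply/eqP => e.
  case iA: (i \in A).
    by have := fsel_exc iA; rewrite e ltnn.
  by have := fsel_def (negbT iA); rewrite e ltnn.
apply/negP => /existsP[i /existsP[j /existsP[k /and4P[ij jk]]]]; rewrite !permE => kj ji.
case jA: (j \in A).
- have ej := fsel_exc jA; case iA: (i \in A).
  + have := cnt_strict ij iA.
    rewrite -(fsel_A iA).2 -(fsel_A jA).2 => /cnt_ltI; lia.
  + have := fsel_def (negbT iA); lia.
- have dj := fsel_def (negbT jA); case kA: (k \in A).
  + have := fsel_exc kA; lia.
  + have jA' : j \in ~: A by rewrite in_setC jA.
    have := cnt_strict jk jA'.
    rewrite -(fsel_D (negbT jA)).2 -(fsel_D (negbT kA)).2 => /cnt_ltI; lia.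
Qed.

Lemma sig_Phi : (Aset sig, Bset sig) = (A, B).
Proof.
have eA : Aset sig = A.
  apply/setP => i; rewrite inE permE; case iA: (i \in A); first exact: fsel_exc.
  by apply/negbTE; rewrite -leqNgt ltnW // fsel_def ?iA.
congr (_, _) => //; apply/eqP; rewrite eqEcard; apply/andP; split.
  apply/subsetP => b /imsetP[a]; rewrite eA => aA ->; rewrite permE; exact: (fsel_A aA).1.
by rewrite /Bset card_imset ?eA ?V_card //; exact: perm_inj.
Qed.

End Build.

Section Img.
Variable n : nat.

Lemma Phi_img : [set (Aset s, Bset s) | s in D321 n] = [set p | valid p.1 p.2].
Proof.
apply/setP => p; rewrite inE; apply/imsetP/idP => [[s] | Vp].
  by rewrite inE => /andP[ds _] ->; exact: Phi_valid.
exists (sig Vp); first exact: sig_D321.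
by rewrite sig_Phi; case: p Vp.
Qed.

End Img.

Section Stats.
Variable n : nat.
Implicit Types (s : 'S_n).

Lemma cpkE s : is_derangement s -> cpk_stat s = #|Bset s :\: Aset s|.
Proof.
move=> ds; apply: eq_card => x; rewrite !inE.
have [a ->] := as_img s x; rewrite memB permK inE.
case aA: (a < s a); rewrite ?andbT ?andbF //.
have : s (s a) != s a by move/forallP: ds => /(_ (s a)).
rewrite neq_ltn => /orP[h|h].
  by rewrite h -leqNgt ltnW.
by rewrite h ltnNge ltnW.
Qed.

Lemma excE s : exc_stat s = #|Aset s|.
Proof. by []. Qed.

Lemma row_count s (i : 'I_n) : is_derangement s -> avoids321 s ->
  #|[set j : 'I_n | (i < j)%N && (s j < s i)%N]| = if i \in Aset s then s i - i else 0.
Proof.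
move=> ds av; case iA: (i \in Aset s).
- have si : (i < s i)%N by move: iA; rewrite inE.
  have E : [set j : 'I_n | (s j < s i)%N] =
           [set j : 'I_n | (i < j)%N && (s j < s i)%N] :|: [set j : 'I_n | (j < i)%N].
    apply/setP => j; rewrite !inE; case: (ltngtP i j) => h /=.
    + by rewrite orbF.
    + case jA: (j \in Aset s).
        by rewrite monoA.
      by have := der_lt ds (negbT jA); lia.
    + by rewrite (_ : j = i) ?ltnn //; apply: val_inj.
  have cE : #|[set j : 'I_n | (s j < s i)%N]| =
     #|[set j : 'I_n | (i < j)%N && (s j < s i)%N] :|: [set j : 'I_n | (j < i)%N]| by rewrite E.
  move: cE; rewrite cardsU_disj.
    have -> : [set j : 'I_n | (s j < s i)%N] = s @^-1: [set v : 'I_n | (v < s i)%N].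
      by apply/setP => j; rewrite !inE.
    rewrite card_preimset; last exact: perm_inj.
    rewrite !card_lt_ord; [move=> h; rewrite [in RHS]h addnK // | exact: ltnW (ltn_ord _) | exact: ltnW (ltn_ord _)].
  rewrite -setI_eq0; apply/eqP/setP => j; rewrite !inE; apply/negbTE; lia.
- have iA' : i \notin Aset s by rewrite iA.
  have si := der_lt ds iA'.
  apply/eqP; rewrite cards_eq0; apply/eqP/setP => j; rewrite !inE.
  apply/negbTE/negP => /andP[ij ji].
  case jA: (j \in Aset s).
    by move: jA; rewrite inE; lia.
  by move: ji; rewrite monoD ?jA //; lia.
Qed.

Lemma invE s : is_derangement s -> avoids321 s ->
  inv_stat s = (\sum_(j in Bset s) (j : nat) - \sum_(i in Aset s) (i : nat))%N.
Proof.
move=> ds av.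
rewrite /inv_stat -sum1_card.
have -> : \sum_(p in [set p : 'I_n * 'I_n | (p.1 < p.2)%N && (s p.2 < s p.1)%N]) 1 =
    \sum_(i : 'I_n) \sum_(j : 'I_n | (i < j)%N && (s j < s i)%N) 1.
  rewrite (pair_big_dep xpredT (fun i j : 'I_n => (i < j)%N && (s j < s i)%N)) /=.
  by apply: eq_bigl => p; rewrite inE.
have -> : \sum_(i : 'I_n) \sum_(j : 'I_n | (i < j)%N && (s j < s i)%N) 1 =
    \sum_(i : 'I_n) (if i \in Aset s then (s i - i)%N else 0%N).
  apply: eq_bigr => i _; rewrite -row_count // sum1_card.
  by apply: eq_card => j; rewrite inE.
rewrite -big_mkcond /= sumnB; last by move=> i; rewrite inE => /ltnW.
congr (_ - _)%N; rewrite /Bset big_imset //; move=> a b _ _; exact: perm_inj.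
Qed.

End Stats.

Local Open Scope ring_scope.

Lemma sum_subsets (R : comNzRingType) (T : finType) (W : {set T}) (t : R) :
  \sum_(I : {set T} | I \subset W) t ^+ #|I| = (1 + t) ^+ #|W|.
Proof.
rewrite addrC exprD1n.
rewrite (partition_big (fun I : {set T} => (inord #|I| : 'I_#|W|.+1)) xpredT) //=.
apply: eq_bigr => k _.
transitivity (\sum_(I in [set I : {set T} | I \subset W & #|I| == k]) t ^+ k).
  apply: eq_big => I; rewrite ?inE.
    case sW: (I \subset W) => //=.
    have le := subset_leq_card sW.
    apply/eqP/eqP => [<-|e]; first by rewrite inordK.
    by apply: val_inj; rewrite /= inordK.
  by case/andP => sW /eqP <-; rewrite inordK // ltnS subset_leq_card.
by rewrite sumr_const cards_draws.
Qed.

Section Sum.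
Variable n : nat.
Implicit Types (s : 'S_n) (A B I : {set 'I_n}).

Definition wt (p : {set 'I_n} * {set 'I_n}) : nat :=
  (\sum_(j in p.2) (j : nat) - \sum_(i in p.1) (i : nat))%N.

Lemma sumU A I : [disjoint A & I] ->
  (\sum_(j in A :|: I) (j : nat) = \sum_(j in A) (j : nat) + \sum_(j in I) (j : nat))%N.
Proof.
move=> d; rewrite -bigU //; apply: eq_bigl => j; by rewrite !inE.
Qed.

Lemma P_sets (R : comNzRingType) (q x t : R) :
  P_inv_cpk_exc n q x t =
  \sum_(p | valid p.1 p.2) q ^+ wt p * x ^+ #|p.2 :\: p.1| * t ^+ #|p.1|.
Proof.
rewrite /P_inv_cpk_exc.
transitivity (\sum_(p in [set (Aset s, Bset s) | s in D321 n])
    q ^+ wt p * x ^+ #|p.2 :\: p.1| * t ^+ #|p.1|); last first.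
  by rewrite Phi_img; apply: eq_bigl => p; rewrite inE.
rewrite big_imset /=; last exact: Phi_inj.
apply: eq_bigr => s; rewrite inE => /andP[ds av].
by rewrite invE // cpkE // excE.
Qed.

Definition W (r : {set 'I_n} * {set 'I_n}) := ~: (r.1 :|: r.2).

Lemma P_reps (R : comNzRingType) (q x t : R) :
  P_inv_cpk_exc n q x t =
  \sum_(r | valid r.1 r.2 && [disjoint r.1 & r.2])
     q ^+ wt r * x ^+ #|r.2| * t ^+ #|r.1| * (1 + t) ^+ #|W r|.
Proof.
rewrite P_sets.
rewrite (partition_big (fun p : {set 'I_n} * {set 'I_n} => (p.1 :\: p.2, p.2 :\: p.1))
    (fun r => valid r.1 r.2 && [disjoint r.1 & r.2])) /=; last first.
  move=> [A B] /= VAB; apply/andP; split.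
    rewrite -(valid_common (I := A :&: B)).
      have -> : A :\: B :|: A :&: B = A by apply/setP => i; rewrite !inE; case: (i \in A); case: (i \in B).
      have -> : B :\: A :|: A :&: B = B by apply/setP => i; rewrite !inE; case: (i \in A); case: (i \in B).
      exact: VAB.
    by rewrite -setI_eq0; apply/eqP/setP => i; rewrite !inE; case: (i \in A); case: (i \in B).
  by rewrite -setI_eq0; apply/eqP/setP => i; rewrite !inE; case: (i \in A); case: (i \in B).
apply: eq_bigr => [[r1 r2]] /= /andP[Vr dr].
have dr' : forall i, i \in r1 -> i \in r2 = false by move=> i; apply: disjointFr.
rewrite (reindex_onto (fun I : {set 'I_n} => (r1 :|: I, r2 :|: I)) (fun p => p.1 :&: p.2)) /=; last first.
  move=> [A B] /= /andP[_ /eqP [<- <-]].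
  by congr (_, _); apply/setP => i; rewrite !inE; case: (i \in A); case: (i \in B).
transitivity (\sum_(I : {set 'I_n} | I \subset ~: (r1 :|: r2))
     q ^+ wt (r1, r2) * x ^+ #|r2| * t ^+ #|r1| * t ^+ #|I|).
  have toW : forall I : {set 'I_n}, (r1 :|: I) :\: (r2 :|: I) = r1 ->
      (r2 :|: I) :\: (r1 :|: I) = r2 -> I \subset ~: (r1 :|: r2).
    move=> I e1 e2; apply/subsetP => i iI.
    rewrite !inE; apply/negP => /orP[ir|ir].
      by move/setP: e1 => /(_ i); rewrite !inE ir iI !orbT.
    by move/setP: e2 => /(_ i); rewrite !inE ir iI !orbT.
  apply: eq_big => I.
    apply/idP/idP.
      by move=> /andP[/andP[_ /eqP [e1 e2]] _]; exact: toW.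
    move=> /subsetP sI.
    have sI' : forall i, i \in I -> (i \in r1 = false) /\ (i \in r2 = false).
      by move=> i /sI; rewrite !inE negb_or => /andP[/negbTE -> /negbTE ->].
    apply/andP; split; first (apply/andP; split).
    - rewrite valid_common // disjoint_sym; rewrite -setI_eq0; apply/eqP/setP => i.
      rewrite !inE; case iI: (i \in I); rewrite ?andbF //; by have [-> ->] := sI' i iI.
    - apply/eqP; congr (_, _); apply/setP => i; rewrite !inE; case iI: (i \in I).
      + by have [h1 h2] := sI' i iI; rewrite ?h1 ?h2 ?andbF ?orbT.
      + rewrite !orbF; case ir1: (i \in r1); rewrite ?andbT ?andbF //.
        by rewrite dr'.
      + by have [h1 h2] := sI' i iI; rewrite ?h1 ?h2 ?andbF ?orbT.
      + rewrite !orbF; case ir1: (i \in r1); rewrite ?andbT ?andbF //=.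
        by rewrite dr'.
    - apply/eqP/setP => i; rewrite !inE; case iI: (i \in I); rewrite ?orbT ?orbF //=.
      by case ir1: (i \in r1) => //=; rewrite dr'.
  move=> /andP[/andP[_ /eqP [e1 e2]] _]; have /subsetP sI := toW I e1 e2.
  have sI' : forall i, i \in I -> (i \in r1 = false) /\ (i \in r2 = false).
    by move=> i /sI; rewrite !inE negb_or => /andP[/negbTE -> /negbTE ->].
  have d1 : [disjoint r1 & I].
    rewrite -setI_eq0; apply/eqP/setP => i; rewrite !inE; case iI: (i \in I); rewrite ?andbF //.
    by have [-> _] := sI' i iI.
  have d2 : [disjoint r2 & I].
    rewrite -setI_eq0; apply/eqP/setP => i; rewrite !inE; case iI: (i \in I); rewrite ?andbF //.
    by have [_ ->] := sI' i iI.
  rewrite /wt /= !sumU // subnDr cardsU_disj // exprD mulrA.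
  congr (_ * _ * _ * _); congr (_ ^+ _); apply: eq_card => i; rewrite !inE.
  case iI: (i \in I).
    by have [h1 h2] := sI' i iI; rewrite ?h1 ?h2 ?andbF ?orbT.
  rewrite !orbF; case ir1: (i \in r1); rewrite ?andbT ?andbF //=.
  by rewrite dr'.
by rewrite -mulr_sumr sum_subsets.
Qed.

End Sum.
Lemma form2_alg (R : rcfType) (x t : R) :
  x != 0 -> x != 1 -> t != 0 -> 0 <= (1 + t) ^+ 2 - 4 * x * t ->
  let r := Num.sqrt ((1 + t) ^+ 2 - 4 * x * t) in
  let u := (1 + t ^+ 2 - 2 * x * t - (1 - t) * r) / (2 * (1 - x) * t) in
  let v := ((1 + t) ^+ 2 - 2 * x * t - (1 + t) * r) / (2 * x * t) in
  1 + u * v != 0 ->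
  ((1 + u) / (1 + u * v)) ^+ 2 * v = x * t /\ (1 + u) / (1 + u * v) * (1 + v) = 1 + t.
Proof.
move=> x0 x1 t0 D0 r u v uv0.
have r2 : r ^+ 2 = (1 + t) ^+ 2 - 4 * x * t by rewrite sqr_sqrtr.
have two0 : (2 : R) != 0 by rewrite pnatr_eq0.
have x1' : 1 - x != 0 by rewrite subr_eq0 eq_sym.
set a := 2 * (1 - x) * t.
set b := 2 * x * t.
set Nu := 1 + t ^+ 2 - 2 * x * t - (1 - t) * r.
set Nv := (1 + t) ^+ 2 - 2 * x * t - (1 + t) * r.
have a0 : a != 0 by rewrite /a !mulf_neq0.
have b0 : b != 0 by rewrite /b !mulf_neq0.
have hu : u = Nu / a by [].
have hv : v = Nv / b by [].
have E2 : (1 + u) * (1 + v) = (1 + t) * (1 + u * v).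
  apply/eqP; rewrite -subr_eq0.
  have -> : (1 + u) * (1 + v) - (1 + t) * (1 + u * v) =
     ((t ^+ 3 - t) * (r ^+ 2 - ((1 + t) ^+ 2 - 4 * x * t))) / (a * b).
    by rewrite hu hv /Nu /Nv /a /b; field; rewrite ?t0 ?x0 ?x1' ?two0.
  by rewrite r2 subrr mulr0 mul0r.
have E1 : (1 + u) ^+ 2 * v = x * t * (1 + u * v) ^+ 2.
  apply/eqP; rewrite -subr_eq0.
  have -> : (1 + u) ^+ 2 * v - x * t * (1 + u * v) ^+ 2 =
     ((0  - x*t + 2*x*t*r - x*t*r^+2 - 6*x*t^+2 + 6*x*t^+2*r - 9*x*t^+3 - 2*x*t^+3*r + 2*x*t^+3*r^+2 - 4*x*t^+4 - 6*x*t^+4*r + x*t^+5 - x*t^+5*r^+2 + 2*x*t^+6 + x*t^+7 + 8*x^+2*t^+2 - 8*x^+2*t^+2*r + 24*x^+2*t^+3 + 4*x^+2*t^+4 + 8*x^+2*t^+4*r - 4*x^+2*t^+6 - 16*x^+3*t^+3) * (r ^+ 2 - ((1 + t) ^+ 2 - 4 * x * t))) / (a ^+ 2 * b ^+ 2).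
    by rewrite hu hv /Nu /Nv /a /b; field; rewrite ?t0 ?x0 ?x1' ?two0.
  by rewrite r2 subrr mulr0 mul0r.
split.
  by rewrite expr_div_n mulrAC E1 mulfK // expf_neq0.
by rewrite mulrAC E2 mulfK.
Qed.

Lemma term1 (R : comNzRingType) (c X T t Q : R) (k m : nat) :
  c ^+ 2 * X * T = t -> c * (1 + T) = 1 + t ->
  Q * 1 ^+ k * t ^+ k * (1 + t) ^+ m = c ^+ (m + k + k) * (Q * X ^+ k * T ^+ k * (1 + T) ^+ m).
Proof.
move=> <- <-; rewrite expr1n mulr1 !exprMn !exprD.
move: (c ^+ k) (c ^+ m) (X ^+ k) (T ^+ k) ((1 + T) ^+ m) => a b d e f; ring.
Qed.

Lemma term2 (R : comNzRingType) (c v x t Q : R) (k m : nat) :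
  c ^+ 2 * v = x * t -> c * (1 + v) = 1 + t ->
  Q * x ^+ k * t ^+ k * (1 + t) ^+ m = c ^+ (m + k + k) * (Q * 1 ^+ k * v ^+ k * (1 + v) ^+ m).
Proof.
move=> e1 <-; rewrite -[Q * x ^+ k * t ^+ k]mulrA -exprMn -e1 expr1n mulr1 !exprMn !exprD.
move: (c ^+ k) (c ^+ m) (v ^+ k) ((1 + v) ^+ m) => a b d f; ring.
Qed.

Lemma rep_card n (r1 r2 : {set 'I_n}) : valid r1 r2 -> [disjoint r1 & r2] ->
  #|r1| = #|r2| /\ (#|W (r1, r2)| + #|r2| + #|r2| = n)%N.
Proof.
move=> /and3P[/eqP e _ _] d; split => //.
have h : (#|r1 :|: r2| + #|W (r1, r2)|)%N = n := etrans (cardsC _) (card_ord n).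
rewrite cardsU_disj // e in h; lia.
Qed.

Lemma Pexc1 (R : comNzRingType) n (q t : R) : P_inv_exc n q t = P_inv_cpk_exc n q 1 t.
Proof. by apply: eq_bigr => s _; rewrite expr1n mulr1. Qed.

Unset Implicit Arguments.
Set Strict Implicit.

Theorem corollary3p8 (n : nat) (hn : (1 <= n)%N) :
  (forall (F : fieldType) (q x t : F),
      1 + x != 0 -> x + t != 0 -> 1 + x * t != 0 ->
      P_inv_exc n q t =
        ((1 + x * t) / (1 + x)) ^+ n *
        P_inv_cpk_exc n q ((1 + x) ^+ 2 * t / ((x + t) * (1 + x * t)))
                          ((x + t) / (1 + x * t))) /\
  (forall (R : rcfType) (q x t : R),
      x != 0 -> x != 1 -> t != 0 -> 0 <= (1 + t) ^+ 2 - 4 * x * t ->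
      let r := Num.sqrt ((1 + t) ^+ 2 - 4 * x * t) in
      let u := (1 + t ^+ 2 - 2 * x * t - (1 - t) * r) / (2 * (1 - x) * t) in
      let v := ((1 + t) ^+ 2 - 2 * x * t - (1 + t) * r) / (2 * x * t) in
      1 + u * v != 0 ->
      P_inv_cpk_exc n q x t = ((1 + u) / (1 + u * v)) ^+ n * P_inv_exc n q v).
Proof.
split.
- move=> F q x t h1 h2 h3.
  rewrite Pexc1 !P_reps mulr_sumr; apply: eq_bigr => [[r1 r2]] /= /andP[Vr dr].
  have [k1 km] := rep_card Vr dr.
  have -> : forall a : F, a ^+ n = a ^+ (#|W (r1, r2)| + #|r2| + #|r2|) by rewrite km.
  rewrite k1; apply: term1.
    by field; rewrite h1 h2 h3.
  by field; rewrite h1 h3.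
- move=> R q x t x0 x1 t0 D0 r u v uv0.
  have [e1 e2] := form2_alg x0 x1 t0 D0 uv0.
  rewrite Pexc1 !P_reps mulr_sumr; apply: eq_bigr => [[r1 r2]] /= /andP[Vr dr].
  have [k1 km] := rep_card Vr dr.
  have -> : forall a : R, a ^+ n = a ^+ (#|W (r1, r2)| + #|r2| + #|r2|) by rewrite km.
  rewrite k1; exact: term2.
Qed.
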